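(* The VCCR $scwc$ satisfies Availability; in fact, $scwc(\mathbf P)$ is acyclic for every linear profile $\mathbf P$.
   Context: Profiles: $\mathbf P:V\to\mathcal L(X)$, $V$ nonempty finite set of voters, $X=X(\mathbf P)$ nonempty finite set of candidates, $\mathcal L(X)$ strict linear orders. $\mathrm{Margin}_{\mathbf P}(x,y)$ = #voters ranking $x$ above $y$ minus #ranking $y$ above $x$. Majority path: sequence of candidates with positive consecutive margins; strength = minimum of those margins. $(x,y)\in sc(\mathbf P)$ iff $\mathrm{Margin}_{\mathbf P}(x,y)>0$ exceeds the strength of every majority path from $y$ to $x$. $(x,y)\in wc(\mathbf P)$ iff $\mathrm{Margin}_{\mathbf P}(x,y)>0$ and $\mathrm{Margin}_{\mathbf P}(x,z)\ge\mathrm{Margin}_{\mathbf P}(y,z)$ for all $z\in X(\mathbf P)$. $scwc(\mathbf P)=sc(\mathbf P)\cup wc(\mathbf P)$. Availability: for every profile some candidate $x$ has no $y$ with $(y,x)\in scwc(\mathbf P)$. *)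

(* Defs.v *)
From mathcomp Require Import all_boot all_order all_algebra.
Set Implicit Arguments. Unset Strict Implicit. Unset Printing Implicit Defensive.
Import Order.TTheory GRing.Theory Num.Theory.
Local Open Scope ring_scope.

Definition strict_linear_order (X : finType) (R : rel X) : Prop :=
  [/\ irreflexive R, transitive R & forall x y, x != y -> R x y || R y x].

(* A linear profile: each voter v in V submits the ranking P v
   ("P v x y" means v ranks x above y). *)
Definition linear_profile (V X : finType) (P : V -> rel X) : Prop :=
  forall v, strict_linear_order (P v).

Definition Margin (V X : finType) (P : V -> rel X) (x y : X) : int :=
  (#|[set v | P v x y]|%:Z - #|[set v | P v y x]|%:Z).

Definition majority_path (V X : finType) (P : V -> rel X) (y : X) (p : seq X) : bool :=
  path (fun a b => 0 < Margin P a b) y p.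

Fixpoint strength (V X : finType) (P : V -> rel X) (x : X) (p : seq X) : int :=
  match p with
  | [::] => 0
  | [:: y] => Margin P x y
  | y :: p' => Num.min (Margin P x y) (strength P y p')
  end.

Definition sc (V X : finType) (P : V -> rel X) (x y : X) : Prop :=
  0 < Margin P x y /\
  forall p : seq X, p != [::] -> last y p = x -> majority_path P y p ->
    strength P y p < Margin P x y.

Definition wc (V X : finType) (P : V -> rel X) (x y : X) : Prop :=
  0 < Margin P x y /\ forall z : X, Margin P y z <= Margin P x z.

Definition scwc (V X : finType) (P : V -> rel X) (x y : X) : Prop :=
  sc P x y \/ wc P x y.

Fixpoint ppath (T : Type) (e : T -> T -> Prop) (x : T) (p : seq T) : Prop :=
  match p with
  | [::] => True
  | y :: p' => e x y /\ ppath e y p'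
  end.

Definition acyclic (T : eqType) (e : T -> T -> Prop) : Prop :=
  forall (x : T) (p : seq T), p != [::] -> last x p = x -> ~ ppath e x p.

Definition available (V X : finType) (P : V -> rel X) : Prop :=
  exists x : X, forall y : X, ~ scwc P y x.

(* Main.v *)
Require Import Defs.
From mathcomp Require Import all_boot all_order all_algebra.
From mathcomp Require Import zify.
From Stdlib Require Import ClassicalEpsilon.
Set Implicit Arguments. Unset Strict Implicit. Unset Printing Implicit Defensive.
Import Order.TTheory GRing.Theory Num.Theory.

Section Helpers.
Local Open Scope ring_scope.

Definition dom (V X : finType) (P : V -> rel X) (x y : X) : Prop :=
  forall z, Margin P y z <= Margin P x z.

Lemma MarginC (V X : finType) (P : V -> rel X) x y : Margin P y x = - Margin P x y.
Proof. by rewrite /Margin opprB. Qed.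

Lemma Margin_xx (V X : finType) (P : V -> rel X) x : Margin P x x = 0.
Proof. by rewrite /Margin subrr. Qed.

Lemma dom_r (V X : finType) (P : V -> rel X) x y z :
  dom P y z -> Margin P x y <= Margin P x z.
Proof. move=> H; rewrite (MarginC P y x) (MarginC P z x) lerN2; exact: H. Qed.

Lemma dom_trans (V X : finType) (P : V -> rel X) x y z :
  dom P x y -> dom P y z -> dom P x z.
Proof. move=> H1 H2 w; exact: le_trans (H2 w) (H1 w). Qed.

Lemma wc_dom (V X : finType) (P : V -> rel X) x y : wc P x y -> dom P x y.
Proof. by case. Qed.

Lemma scwc_pos (V X : finType) (P : V -> rel X) x y : scwc P x y -> 0 < Margin P x y.
Proof. by case=> [[]|[]]. Qed.

Lemma ppath_cat (T : Type) (e : T -> T -> Prop) x p1 b p2 :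
  ppath e x (p1 ++ b :: p2) <-> ppath e x p1 /\ e (last x p1) b /\ ppath e b p2.
Proof.
elim: p1 x => [|y p1 IH] x /=; first tauto.
have := IH y; tauto.
Qed.

Lemma ppath_sub (T : Type) (e1 e2 : T -> T -> Prop) :
  (forall x y, e1 x y -> e2 x y) -> forall x p, ppath e1 x p -> ppath e2 x p.
Proof.
move=> H x p; elim: p x => [|y p IH] x //= [h1 h2]; split; [exact: H|exact: IH].
Qed.

Lemma find_bad (T : Type) (A B : T -> T -> Prop) x p :
  ppath A x p -> ~ ppath B x p ->
  exists p1 b p2, p = p1 ++ b :: p2 /\ ~ B (last x p1) b.
Proof.
elim: p x => [|y p IH] x /=; first by move=> _ [].
move=> [Axy Hp] nB.
case: (classic (B x y)) => Bxy.
- have nBp : ~ ppath B y p by tauto.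
  have [p1 [b [p2 [-> Hb]]]] := IH y Hp nBp.
  by exists (y :: p1), b, p2.
- by exists [::], y, p.
Qed.

Lemma find_step (Q : nat -> Prop) N :
  Q 1%N -> ~ Q N.+1 -> exists k, (0 < k)%N /\ Q k /\ ~ Q k.+1.
Proof.
elim: N => [|N IH] Q1 nQ; first by [].
case: (classic (Q N.+1)) => h.
- by exists N.+1.
- exact: IH.
Qed.

Definition Inv (V X : finType) (P : V -> rel X) (m : int) (a y : X) : Prop :=
  dom P y a \/ exists r, r != [::] /\ last y r = a /\
     path (fun u v => m <= Margin P u v) y r.

Lemma walk (V X : finType) (P : V -> rel X) m a y0 q :
  ppath (fun u v => wc P u v \/ m <= Margin P u v) y0 q ->
  Inv P m a (last y0 q) -> Inv P m a y0.
Proof.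
elim: q y0 => [|y q IH] y0 //= [E Hq] HI.
have := IH y Hq HI; clear IH Hq HI.
case: E => [/wc_dom D | Hm].
- case => [Dya | [r [rn [lr pr]]]].
  + left; exact: dom_trans D Dya.
  + right. case: r rn lr pr => [|y2 r] // _ lr /= /andP [h1 h2].
    exists (y2 :: r); split => //; split => //=.
    rewrite h2 andbT. exact: le_trans h1 (D y2).
- case => [Dya | [r [rn [lr pr]]]].
  + right; exists [:: a]; split=>//; split=>//=.
    rewrite andbT. exact: le_trans Hm (dom_r _ Dya).
  + right; exists (y :: r); split=>//; split=>//=.
    by rewrite Hm pr.
Qed.

Lemma path_strength (V X : finType) (P : V -> rel X) m y r :
  r != [::] -> path (fun u v => m <= Margin P u v) y r -> m <= strength P y r.
Proof.
elim: r y => [|z r IH] y // _ /= /andP [h1 h2].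
case: r IH h2 => [|w r] IH h2; first done.
rewrite /= le_min h1 /= IH //.
Qed.

Lemma wc_chain (V X : finType) (P : V -> rel X) y p :
  ppath (wc P) y p -> dom P y (last y p).
Proof.
elim: p y => [|z p IH] y /=; first by move=> _ w.
move=> [H Hp]; exact: dom_trans (wc_dom H) (IH _ Hp).
Qed.

Lemma all_wc (V X : finType) (P : V -> rel X) x p :
  (forall N : nat, ppath (fun u v => wc P u v \/ (N%:Z) <= Margin P u v) x p) ->
  ppath (wc P) x p.
Proof.
elim: p x => [|y p IH] x //= H; split.
- case: (classic (wc P x y)) => // nw; exfalso.
  have [[//|h] _] := H (absz (Margin P x y)).+1.
  move: h; lia.
- apply: IH => N; exact: (H N).2.
Qed.

Lemma acyc (V X : finType) (P : V -> rel X) : acyclic (scwc P).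
Proof.
move=> x p pn lp Hp.
pose Q := fun N : nat => ppath (fun u v => wc P u v \/ (N%:Z) <= Margin P u v) x p.
have Qle : forall N : nat, (N <= 1)%N -> Q N.
  move=> N hN; apply: (ppath_sub _ Hp) => u v /scwc_pos h; right; move: h; lia.
case: (classic (forall N, Q N)) => [HQ | ].
- have Hw := all_wc HQ; clear HQ Qle Q.
  case: p pn lp Hp Hw => [|y p'] // _ /= lp _ [Hxy Hw].
  have D := wc_chain Hw; rewrite lp in D.
  have := D y; rewrite Margin_xx => h.
  by have := lt_le_trans Hxy.1 h; rewrite ltxx.
- move/not_all_ex_not => [N nQ].
  case: N nQ => [|N] nQ; first by apply: nQ; apply: Qle.
  have [k [k0 [Qk nQk]]] := @find_step Q N (Qle 1%N (leqnn _)) nQ.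
  have [p1 [b [p2 [ep nB]]]] := find_bad Qk nQk.
  move: Hp Qk; clear Qle nQk nQ; subst Q; rewrite ep => /ppath_cat [_ [Hab _]] /ppath_cat [Q1' [Eab Q2']].
  set a := last x p1 in nB Hab Q1' Eab.
  have nwc : ~ wc P a b by tauto.
  have Mab : Margin P a b = k%:Z.
    case: Eab => // h; have h2 : ~ (k.+1%:Z <= Margin P a b) by tauto.
    move: h h2; lia.
  have sab : sc P a b by case: Hab.
  have Ia : Inv P k a a by left => z.
  have Ix : Inv P k a x := walk Q1' Ia.
  rewrite ep last_cat /= in lp.
  have Ib : Inv P k a b by apply: (walk Q2'); rewrite lp.
  case: Ib => [D | [r [rn [lr pr]]]].
  + have := D b; rewrite Margin_xx => h.
    by have := lt_le_trans sab.1 h; rewrite ltxx.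
  + have mp : majority_path P b r.
      apply: sub_path pr => u v /= h; apply: lt_le_trans h; move: k0; lia.
    have h1 := sab.2 r rn lr mp.
    have h2 := path_strength rn pr.
    rewrite Mab in h1; move: h1 h2; lia.
Qed.

End Helpers.

Fixpoint back (X : Type) (f : X -> X) (y : X) (d : nat) : seq X :=
  if d is d'.+1 then iter d' f y :: back f y d' else [::].

Lemma back_ppath (X : Type) (e : X -> X -> Prop) (f : X -> X) y :
  (forall x, e (f x) x) ->
  forall d, ppath e (iter d f y) (back f y d) /\ last (iter d f y) (back f y d) = y.
Proof.
move=> Hf; elim=> [|d [IH1 IH2]] //=.
Qed.

Lemma acyc_avail (X : finType) (e : X -> X -> Prop) :
  0 < #|X| -> acyclic e -> exists x, forall y, ~ e y x.
Proof.
move=> X0 Ha; apply: NNPP => nA.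
have H : forall x, exists y, e y x.
  move=> x; apply: NNPP => nex; apply: nA; exists x => y eyx; apply: nex; by exists y.
pose f := fun x => proj1_sig (constructive_indefinite_description _ (H x)).
have Hf : forall x, e (f x) x by move=> x; rewrite /f; case: constructive_indefinite_description.
have [x0 _] := card_gt0P X0.
pose g := fun i : 'I_(#|X|.+1) => iter i f x0.
have ninj : ~ injective g.
  move=> inj; have := leq_card g inj; rewrite card_ord; lia.
have [i [j [gij nij]]] : exists i j, g i = g j /\ i <> j.
  apply: NNPP => nex; apply: ninj => i j gij; apply: NNPP => nij; apply: nex.
  by exists i, j.
wlog lt_ij : i j gij nij / (i < j)%N.
  move=> W; case: (ltngtP i j) => h; first exact: (W i j).
  - by apply: (W j i) => // /esym.
  - by exfalso; apply: nij; apply: val_inj.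
pose y := iter i f x0.
have [hp hl] := back_ppath y Hf (j - i).
have ey : iter (j - i) f y = y.
  by rewrite /y -iterD subnK ?(ltnW lt_ij) //; symmetry.
rewrite ey in hp hl.
apply: (Ha y (back f y (j - i))) => //.
have : (0 < j - i)%N by rewrite subn_gt0.
by case: (j - i)%N.
Qed.

Theorem proposition8p2 (V X : finType) (P : V -> rel X) :
  0 < #|V| -> 0 < #|X| -> linear_profile P ->
  available P /\ acyclic (scwc P).
Proof.
move=> _ X0 _; split; [exact: (acyc_avail X0 (@acyc V X P)) | exact: acyc].
Qed.
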